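(* For any real numbers $a,b$ with $a\neq\pm b$ and any natural number $n\ge1$: if $n$ is even, $\Psi(a,-b,n)=\Psi(-a,-b,n)$ and $\Phi(a,-b,n)=\Phi(-a,-b,n)$; if $n$ is odd, $\Psi(a,-b,n)=\Phi(-a,-b,n)$ and $\Phi(a,-b,n)=\Psi(-a,-b,n)$.
   Context: $\delta(m)=1$ for $m$ odd, $0$ for $m$ even. $\Psi(a,b,n)$, $\Phi(a,b,n)$ are defined by $\Psi(a,b,0)=2$, $\Psi(a,b,1)=1$, $\Psi(a,b,n+1)=(2a-b)^{\delta(n)}\Psi(a,b,n)-a\Psi(a,b,n-1)$ and $\Phi(a,b,0)=0$, $\Phi(a,b,1)=1$, $\Phi(a,b,n+1)=(2a-b)^{\delta(n+1)}\Phi(a,b,n)-a\Phi(a,b,n-1)$ for $n\ge1$. *)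

(* Defs.v *)
From Stdlib Require Import Reals Arith.
Open Scope R_scope.

Definition delta (m : nat) : nat := if Nat.odd m then 1%nat else 0%nat.

Fixpoint Psi (a b : R) (n : nat) {struct n} : R :=
  match n with
  | O => 2
  | S O => 1
  | S ((S m) as k) => (2 * a - b) ^ (delta k) * Psi a b k - a * Psi a b m
  end.

Fixpoint Phi (a b : R) (n : nat) {struct n} : R :=
  match n with
  | O => 0
  | S O => 1
  | S ((S m) as k) => (2 * a - b) ^ (delta (S k)) * Phi a b k - a * Phi a b m
  end.

(* Main.v *)
Require Import Defs.
From Stdlib Require Import Reals Arith Lra Lia.
Open Scope R_scope.

Lemma odd_SS n : Nat.odd (S (S n)) = Nat.odd n.
Proof. rewrite Nat.odd_succ, Nat.even_succ. reflexivity. Qed.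

Lemma Psi_rec4 a b n :
  Psi a b (S (S (S (S n)))) = - b * Psi a b (S (S n)) - a ^ 2 * Psi a b n.
Proof.
  destruct n as [|n].
  - simpl. unfold delta. simpl. ring.
  - cbn [Psi]. unfold delta. rewrite !odd_SS.
    repeat rewrite ?Nat.odd_succ, ?Nat.even_succ, <- ?Nat.negb_odd.
    destruct (Nat.odd n) eqn:E; simpl; ring.
Qed.

Lemma Phi_rec4 a b n :
  Phi a b (S (S (S (S n)))) = - b * Phi a b (S (S n)) - a ^ 2 * Phi a b n.
Proof.
  destruct n as [|n].
  - simpl. unfold delta. simpl. ring.
  - cbn [Phi]. unfold delta. rewrite !odd_SS.
    repeat rewrite ?Nat.odd_succ, ?Nat.even_succ, <- ?Nat.negb_odd.
    destruct (Nat.odd n) eqn:E; simpl; ring.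
Qed.

Lemma main_all (a b : R) (n : nat) :
  (Nat.even n = true ->
     Psi a (- b) n = Psi (- a) (- b) n /\ Phi a (- b) n = Phi (- a) (- b) n) /\
  (Nat.odd n = true ->
     Psi a (- b) n = Phi (- a) (- b) n /\ Phi a (- b) n = Psi (- a) (- b) n).
Proof.
  induction n as [n IH] using lt_wf_ind.
  destruct n as [|[|[|[|n]]]].
  - simpl. split; intros H; [split; reflexivity | discriminate].
  - simpl. split; intros H; [discriminate|]. unfold delta; simpl. split; ring.
  - simpl. split; intros H; [|discriminate]. unfold delta; simpl. split; ring.
  - simpl. split; intros H; [discriminate|]. unfold delta; simpl. split; ring.
  - destruct (IH n ltac:(lia)) as [A1 A2].
    destruct (IH (S (S n)) ltac:(lia)) as [B1 B2].
    rewrite !Psi_rec4, !Phi_rec4.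
    assert (He : Nat.even (S (S (S (S n)))) = Nat.even n) by reflexivity.
    assert (Ho : Nat.odd (S (S (S (S n)))) = Nat.odd n) by (rewrite !odd_SS; reflexivity).
    assert (He2 : Nat.even (S (S n)) = Nat.even n) by reflexivity.
    assert (Ho2 : Nat.odd (S (S n)) = Nat.odd n) by (rewrite !odd_SS; reflexivity).
    rewrite He, Ho. rewrite He2 in B1. rewrite Ho2 in B2.
    split; intros H.
    + destruct (A1 H) as [-> ->]. destruct (B1 H) as [-> ->]. split; ring.
    + destruct (A2 H) as [-> ->]. destruct (B2 H) as [-> ->]. split; ring.
Qed.

Theorem theorem13p2 (a b : R) (n : nat) :
  a <> b -> a <> - b -> (1 <= n)%nat ->
  (Nat.even n = true ->
     Psi a (- b) n = Psi (- a) (- b) n /\ Phi a (- b) n = Phi (- a) (- b) n) /\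
  (Nat.odd n = true ->
     Psi a (- b) n = Phi (- a) (- b) n /\ Phi a (- b) n = Psi (- a) (- b) n).
Proof.
  intros _ _ _. apply main_all.
Qed.
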